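(* Let $n\in\mathbb{N}$, let $0\le\alpha_1\le\alpha_2\le\dots\le\alpha_n$ and $\beta_1\ge\beta_2\ge\dots\ge\beta_n\ge0$ be real numbers, and set $D_1=\bigoplus_{j=1}^n\mathrm{diag}(\alpha_j,\alpha_j)$ and $D_2=\bigoplus_{j=1}^n\mathrm{diag}(\beta_j,\beta_j)$ (both $2n\times 2n$). Then $$\min_{S\in\mathrm{Sp}(2n)}\operatorname{Tr}[D_1SD_2S^\intercal]=\operatorname{Tr}[D_1D_2],$$ where the minimum is over all real symplectic $2n\times 2n$ matrices.
   Context: $\mathrm{Sp}(2n)$ is the set of real $2n\times 2n$ matrices $S$ with $S\Omega S^\intercal=\Omega$, where $\Omega=\bigoplus_{i=1}^n\begin{pmatrix}0&1\\-1&0\end{pmatrix}$. *)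

(* Defs.v *)
From HB Require Import structures.
From mathcomp Require Import all_boot all_order all_algebra.
From mathcomp Require Import reals.
Set Implicit Arguments. Unset Strict Implicit. Unset Printing Implicit Defensive.
Import Order.TTheory GRing.Theory Num.Theory.
Local Open Scope ring_scope.

(* Indices of 2n x 2n matrices are i : 'I_(2*n); index i (0-based) belongs
   to the 2x2 block number i./2 < n. *)
Lemma half_ord_proof (n : nat) (i : 'I_(2 * n)) : (i./2 < n)%N.
Proof.
case: i => i /= Hi. rewrite -(ltn_pmul2l (isT : (0 < 2)%N)).
apply: leq_ltn_trans Hi. by rewrite -{2}(odd_double_half i) -muln2 mulnC leq_addl.
Qed.

Definition half_ord (n : nat) (i : 'I_(2 * n)) : 'I_n := Ordinal (half_ord_proof i).

(* Omega = (+)_{j=1}^n [[0,1],[-1,0]] *)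
Definition Omega (R : pzRingType) (n : nat) : 'M[R]_(2 * n) :=
  \matrix_(i, k) (((i.+1 == k :> nat) && ~~ odd i)%:R - ((k.+1 == i :> nat) && ~~ odd k)%:R).

Definition symplectic (R : pzRingType) (n : nat) (S : 'M[R]_(2 * n)) : Prop :=
  S *m Omega R n *m S^T = Omega R n.

Definition blockdiag2 (R : pzRingType) (n : nat) (a : 'I_n -> R) : 'M[R]_(2 * n) :=
  \matrix_(i, k) ((i == k)%:R * a (half_ord i)).

(* Main.v *)
Require Import Defs.
From HB Require Import structures.
From mathcomp Require Import all_boot all_order all_algebra ring lra.
From mathcomp Require Import reals zify.
Set Implicit Arguments. Unset Strict Implicit. Unset Printing Implicit Defensive.
Import Order.TTheory GRing.Theory Num.Theory.
Local Open Scope ring_scope.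

Section Gen.
Variable R : realFieldType.

Lemma trTM m n (U V : 'M[R]_(m, n)) : \tr (U^T *m V) = \sum_i \sum_j U i j * V i j.
Proof.
rewrite /mxtrace exchange_big; apply: eq_bigr => j _; rewrite mxE; apply: eq_bigr => i _.
by rewrite mxE.
Qed.

Lemma trXXt m n (X : 'M[R]_(m, n)) : \tr (X *m X^T) = \sum_i \sum_j X i j ^+ 2.
Proof.
rewrite /mxtrace; apply: eq_bigr => i _; rewrite mxE; apply: eq_bigr => j _.
by rewrite mxE expr2.
Qed.

Lemma trXXt_ge0 m n (X : 'M[R]_(m, n)) : 0 <= \tr (X *m X^T).
Proof. by rewrite trXXt; apply: sumr_ge0 => i _; apply: sumr_ge0 => j _; apply: sqr_ge0. Qed.

Lemma XXt_eq0 m n (X : 'M[R]_(m, n)) : X *m X^T = 0 -> X = 0.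
Proof.
move=> H; have : \tr (X *m X^T) = 0 by rewrite H linear0.
rewrite trXXt => /eqP; rewrite psumr_eq0; last by move=> i _; apply: sumr_ge0 => j _; apply: sqr_ge0.
move=> /allP H1; apply/matrixP => i j; rewrite mxE.
have /implyP := H1 i (mem_index_enum _) => /(_ isT).
rewrite psumr_eq0; last by move=> k _; apply: sqr_ge0.
move=> /allP /(_ j (mem_index_enum _)) /implyP /(_ isT).
by rewrite sqrf_eq0 => /eqP.
Qed.

Lemma tr_idem_ge0 m n (X : 'M[R]_(m, n)) (Q : 'M[R]_n) :
  Q^T = Q -> Q *m Q = Q -> 0 <= \tr (X *m Q *m X^T).
Proof.
move=> Qs Qi; have -> : X *m Q *m X^T = (X *m Q) *m (X *m Q)^T.
  by rewrite trmx_mul Qs mulmxA -(mulmxA X Q Q) Qi.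
exact: trXXt_ge0.
Qed.

Lemma tr_cs m n (U V : 'M[R]_(m, n)) :
  \tr (U^T *m V) *+ 2 <= \tr (U^T *m U) + \tr (V^T *m V).
Proof.
rewrite !trTM -sumrMnl -big_split /=; apply: ler_sum => i _.
rewrite -sumrMnl -big_split /=; apply: ler_sum => j _.
rewrite -subr_ge0; have := sqr_ge0 (U i j - V i j).
by rewrite sqrrB -!expr2 => /le_trans; apply; rewrite le_eqVlt; apply/orP; left; apply/eqP; ring.
Qed.

Lemma key d k (Om S E F : 'M[R]_d) (J : 'M[R]_(k, d)) :
  S *m Om *m S^T = Om -> Om *m Om^T = 1%:M ->
  E^T = E -> E *m E = E -> F^T = F -> F *m F = F ->
  E *m Om = Om *m E -> F *m Om = Om *m F -> 1%:M - E = J^T *m J ->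
  \tr F - k%:R <= \tr (E *m S *m F *m S^T).
Proof.
move=> hS OOt Es Ei Fs Fi EOm FOm EJ.
have [T [TS Tdef]] : exists T, T *m S = 1%:M /\ T = Om *m S^T *m Om^T.
  exists (Om *m S^T *m Om^T); split => //; apply: mulmx1C.
  by rewrite !mulmxA hS OOt.
have OtO : Om^T *m Om = 1%:M := mulmx1C OOt.
set E' := 1%:M - E.
set A := E *m S *m F.
set M := E' *m S *m F.
have [N [Nfree MN0 rN]] : exists N : 'M[R]_(\rank M, d), [/\ row_free N, (M <= N)%MS & True].
  by exists (row_base M); split => //; [exact: row_base_free | rewrite eq_row_base submx_refl].
set G := N *m N^T.
have Gu : G \in unitmx.
  rewrite -row_free_unit -kermx_eq0; apply/eqP.
  have HK : kermx G *m G = 0 := mulmx_ker G.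
  have : (kermx G *m N) *m (kermx G *m N)^T = 0.
    by rewrite trmx_mul mulmxA -(mulmxA _ N) -/G HK mul0mx.
  by move/XXt_eq0 => /eqP; rewrite mulmx_free_eq0 // => /eqP.
have GT : G^T = G by rewrite /G trmx_mul trmxK.
have GV : G *m invmx G = 1%:M by rewrite mulmxV.
set Q := N^T *m invmx G *m N.
have Qs : Q^T = Q by rewrite /Q !trmx_mul trmxK trmx_inv GT mulmxA.
have Qi : Q *m Q = Q.
  by rewrite /Q !mulmxA -(mulmxA _ N) -/G -(mulmxA _ G) GV mulmx1.
set P := 1%:M - Q.
have Ps : P^T = P by rewrite /P linearB /= trmx1 Qs.
have Pi : P *m P = P by rewrite /P mulmxBl !mulmxBr !mul1mx mulmx1 Qi subrr subr0.
have QP : 1%:M - P = Q by rewrite /P opprB addrC subrK.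
have MP : M *m P = 0.
  have MN : M *m pinvmx N *m N = M by rewrite mulmxKpV.
  rewrite -MN; move: (M *m pinvmx N) => X.
  rewrite /P mulmxBr mulmx1 /Q !mulmxA -(mulmxA _ N (N^T)) -/G -(mulmxA _ G) GV mulmx1.
  by rewrite subrr.
have trQ : \tr Q = (\rank M)%:R.
  by rewrite /Q mxtrace_mulC mulmxA -/G GV mxtrace1.
have rk : (\rank M <= k)%N.
  have -> : M = J^T *m (J *m S *m F) by rewrite /M /E' EJ !mulmxA.
  exact: leq_trans (mxrankM_maxl _ _) (rank_leq_col _).
have EOt : E *m Om^T = Om^T *m E.
  by rewrite -{1}Es -trmx_mul -EOm trmx_mul Es.
have At : A^T = F *m S^T *m E by rewrite /A !trmx_mul Es Fs mulmxA.
have HF : F = F *m T *m E *m S *m F + F *m T *m M.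
  rewrite /M /E' !mulmxA -!mulmxDl -mulmxDr addrC subrK mulmx1.
  by rewrite -(mulmxA F T S) TS mulmx1 Fi.
have XE : Om *m A^T *m Om^T *m A = F *m T *m E *m S *m F.
  rewrite At /A Tdef.
  rewrite !mulmxA -FOm -(mulmxA _ E (Om^T)) EOt mulmxA -(mulmxA _ E E) Ei.
  done.
have AAt : \tr (A *m A^T) = \tr (A *m S^T).
  rewrite At /A !mulmxA -(mulmxA _ F F) Fi mxtrace_mulC !mulmxA Ei.
  done.
have PQ : P = 1%:M - Q by [].
clearbody A P Q M.
have trXP : \tr (Om *m A^T *m Om^T *m A *m P) = \tr (F *m P).
  rewrite XE [in RHS]HF mulmxDl linearD /= -(mulmxA _ M P) MP mulmx0 linear0 addr0.
  done.
have hF : \tr F - (\rank M)%:R <= \tr (F *m P).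
  rewrite PQ mulmxBr mulmx1 linearB /= -trQ lerD2l lerN2.
  rewrite -subr_ge0 -linearB /= -{1}(mul1mx Q) -mulmxBl -{1}Qi mulmxA mxtrace_mulC mulmxA.
  rewrite -{2}Qs; apply: tr_idem_ge0.
    by rewrite linearB /= trmx1 Fs.
  by rewrite mulmxBl !mulmxBr !mul1mx mulmx1 Fi subrr subr0.
have Qs' : (1%:M - P)^T = 1%:M - P by rewrite linearB /= trmx1 Ps.
have Qi' : (1%:M - P) *m (1%:M - P) = 1%:M - P.
  by rewrite mulmxBl !mulmxBr !mul1mx mulmx1 Pi subrr subr0.
have hU : \tr ((A *m Om^T *m P)^T *m (A *m Om^T *m P)) <= \tr (A *m A^T).
  rewrite mxtrace_mulC trmx_mul Ps -!mulmxA (mulmxA P) Pi.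
  rewrite -subr_ge0 -linearB /=.
  have -> : A *m A^T - A *m (Om^T *m (P *m (A *m Om^T)^T)) =
            A *m Om^T *m (1%:M - P) *m (A *m Om^T)^T.
    rewrite !trmx_mul trmxK mulmxBr mulmxBl !mulmxA mulmx1 -(mulmxA A Om^T Om) OtO mulmx1.
    done.
  exact: tr_idem_ge0.
have hV : \tr ((Om^T *m A *m P)^T *m (Om^T *m A *m P)) <= \tr (A *m A^T).
  rewrite !trmx_mul trmxK Ps !mulmxA -(mulmxA _ Om Om^T) OOt mulmx1.
  rewrite mxtrace_mulC !mulmxA Pi (mxtrace_mulC (P *m A^T) A).
  rewrite -subr_ge0 -linearB /=.
  have -> : A *m A^T - A *m (P *m A^T) = A *m (1%:M - P) *m A^T.
    by rewrite mulmxBr mulmxBl mulmx1 mulmxA.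
  exact: tr_idem_ge0.
have hX : \tr (Om *m A^T *m Om^T *m A *m P) <= \tr (A *m A^T).
  have := tr_cs (A *m Om^T *m P) (Om^T *m A *m P).
  have -> : (A *m Om^T *m P)^T *m (Om^T *m A *m P) = P *m (Om *m A^T *m Om^T *m A *m P).
    by rewrite !trmx_mul trmxK Ps !mulmxA.
  rewrite [\tr (P *m _)]mxtrace_mulC -(mulmxA _ P P) Pi => h.
  have := le_trans h (lerD hU hV).
  by rewrite -mulr2n lerMn2r.
rewrite -AAt; apply: le_trans _ hX; rewrite trXP; apply: le_trans _ hF.
by rewrite lerD2l lerN2 ler_nat.
Qed.
End Gen.

Section Conc.
Variable R : realFieldType.
Variable n : nat.

Lemma sig_proof (i : 'I_(2 * n)) : ((if odd i then i.-1 else i.+1) < 2 * n)%N.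
Proof.
case: i => i /= Hi; case: ifP => Ho; first by apply: leq_ltn_trans (leq_pred i) Hi.
have := odd_double_half i; rewrite Ho add0n => Hd.
have : (i./2 < n)%N by rewrite ltn_half_double -muln2 mulnC.
rewrite -Hd; move: (i./2) => m; rewrite -muln2 => Hm; lia.
Qed.

Definition sig (i : 'I_(2 * n)) : 'I_(2 * n) := Ordinal (sig_proof i).
Definition sg (i : 'I_(2 * n)) : R := if odd i then -1 else 1.

Lemma sigE (i : 'I_(2 * n)) : (sig i : nat) = if odd i then i.-1 else i.+1.
Proof. by []. Qed.

Lemma OmegaE (i k : 'I_(2 * n)) : Omega R n i k = (k == sig i)%:R * sg i.
Proof.
rewrite mxE /sg.
have -> : (k == sig i) = (nat_of_ord k == (if odd i then i.-1 else i.+1)) by [].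
move: (nat_of_ord i) (nat_of_ord k) => a b.
case: (boolP (odd a)) => Ho.
  rewrite andbF sub0r mulrN1; congr (- _%:R).
  case: a Ho => [//|a] Ho /=; rewrite eqSS.
  by case: eqP => // ->; move: Ho => /= ->.
rewrite mulr1 andbT.
case: eqP => [<-|Hb] /=; first by rewrite (gtn_eqF (leqW (ltnSn a))) eqxx subr0.
have -> : (b == a.+1) = false by apply/eqP => Hc; apply: Hb; rewrite Hc.
case: eqP => [Hb2|_] /=; last by rewrite subrr.
by move: Hb2 Ho => <- /=; rewrite negbK => ->; rewrite subrr.
Qed.

Lemma sigE' (i : 'I_(2 * n)) : nat_of_ord (sig i) = if odd i then i.-1 else i.+1.
Proof. by []. Qed.

Lemma sig_inv (i : 'I_(2 * n)) : sig (sig i) = i.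
Proof.
apply: ord_inj; rewrite !sigE'; move: (nat_of_ord i) => a.
case: (boolP (odd a)) => Ho.
  by case: a Ho => [//|a] /= Ho; rewrite (negbTE Ho).
by rewrite /= Ho.
Qed.

Lemma sig_inj : injective sig.
Proof. by move=> i k H; rewrite -(sig_inv i) H sig_inv. Qed.

Lemma half_sig (i : 'I_(2 * n)) : half_ord (sig i) = half_ord i.
Proof.
apply: ord_inj; change ((nat_of_ord (sig i))./2 = (nat_of_ord i)./2); rewrite sigE'; move: (nat_of_ord i) => a.
case: (boolP (odd a)) => Ho.
  by case: a Ho => [//|a] /= Ho; rewrite uphalf_half (negbTE Ho).
by rewrite /= uphalf_half (negbTE Ho).
Qed.

Lemma sg2 (i : 'I_(2 * n)) : sg i * sg i = 1.
Proof. by rewrite /sg; case: ifP => _; rewrite ?mulrNN mulr1. Qed.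

Lemma OmT (j k : 'I_(2 * n)) : (Omega R n)^T j k = Omega R n k j.
Proof. by rewrite [LHS]mxE. Qed.

Lemma OOt : Omega R n *m (Omega R n)^T = 1%:M.
Proof.
apply/matrixP => i k; rewrite [LHS]mxE [RHS]mxE.
under eq_bigr => j _ do rewrite OmT !OmegaE.
rewrite (bigD1 (sig i)) //= big1 => [|j Hj]; last by rewrite (negbTE Hj) !mul0r.
rewrite eqxx mul1r (inj_eq sig_inj) addr0.
case: eqP => [->|_]; last by rewrite mul0r mulr0.
by rewrite mul1r sg2.
Qed.

Notation bd := (@blockdiag2 R n).

Lemma bdE (c : 'I_n -> R) : bd c = diag_mx (\row_i c (half_ord i)).
Proof. by apply/matrixP => i k; rewrite !mxE mulr_natl. Qed.

Lemma bd_tr c : (bd c)^T = bd c.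
Proof. by rewrite bdE tr_diag_mx. Qed.

Lemma bd_mul c c' : bd c *m bd c' = bd (fun j => c j * c' j).
Proof.
rewrite [bd c]bdE mul_diag_mx; apply/matrixP => i k; rewrite !mxE.
by rewrite mulrA [c _ * _]mulrC -mulrA.
Qed.

Lemma bd_sub1 c : 1%:M - bd c = bd (fun j => 1 - c j).
Proof.
apply/matrixP => i k; rewrite !mxE mulrBr mulr1.
by case: eqP => [->|]; rewrite ?mul0r ?mul1r ?subr0.
Qed.

Lemma bd_add c c' : bd (fun j => c j + c' j) = bd c + bd c'.
Proof. by apply/matrixP => i k; rewrite !mxE mulrDr. Qed.

Lemma bd_Om c : bd c *m Omega R n = Omega R n *m bd c.
Proof.
rewrite bdE mul_diag_mx mul_mx_diag; apply/matrixP => i k; rewrite mxE [RHS]mxE !OmegaE !mxE.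
case: eqP => [->|_]; last by rewrite !mul0r mulr0.
by rewrite half_sig mulrC.
Qed.

Lemma tr_bd c : \tr (bd c) = \sum_i c (half_ord i).
Proof. by rewrite bdE /mxtrace; apply: eq_bigr => i _; rewrite !mxE eqxx mulr1n. Qed.

Lemma tr_form (x y : 'I_n -> R) (S : 'M[R]_(2 * n)) :
  \tr (bd x *m S *m bd y *m S^T) =
  \sum_i \sum_k x (half_ord i) * y (half_ord k) * S i k ^+ 2.
Proof.
rewrite !bdE mul_diag_mx mul_mx_diag /mxtrace; apply: eq_bigr => i _.
rewrite mxE; apply: eq_bigr => k _; rewrite !mxE.
by rewrite expr2; ring.
Qed.

Definition Jm (p : nat) : 'M[R]_(2 * p, 2 * n) := \matrix_(a, i) (a == i :> nat)%:R.

Lemma JJt p : (p <= n)%N -> Jm p *m (Jm p)^T = 1%:M.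
Proof.
move=> hp; have hpn : (2 * p <= 2 * n)%N by rewrite leq_mul2l hp orbT.
apply/matrixP => a b; rewrite !mxE (bigD1 (widen_ord hpn a)) //= big1 => [|i Hi]; last first.
  rewrite !mxE; case: eqP => [Ha|]; last by rewrite mul0r.
  by exfalso; move/eqP: Hi; apply; apply: ord_inj; rewrite /= Ha.
by rewrite !mxE eqxx mul1r addr0 [a == b]eq_sym.
Qed.

Lemma JtJ p : (p <= n)%N -> (Jm p)^T *m Jm p = bd (fun j => (j < p)%N%:R).
Proof.
move=> hp; apply/matrixP => i k; rewrite !mxE.
have Hh : (half_ord i < p)%N = (i < 2 * p)%N by rewrite /= ltn_half_double -mul2n.
rewrite Hh; case: (ltnP i (2 * p)) => Hi.
  pose i0 : 'I_(2 * p) := Ordinal Hi.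
  rewrite (bigD1 i0) //= big1 => [|a Ha]; last first.
    rewrite !mxE; case: eqP => [Hv|]; last by rewrite mul0r.
    by exfalso; move/eqP: Ha; apply; apply: ord_inj; rewrite /= Hv.
  rewrite !mxE eqxx mul1r addr0 mulr1.
  by [].
rewrite mulr0 big1 // => a _; rewrite !mxE.
case: eqP => [Hv|]; last by rewrite mul0r.
by exfalso; move: (ltn_ord a); rewrite Hv ltnNge Hi.
Qed.

Lemma bd_ext c c' : (forall j, c j = c' j) -> bd c = bd c'.
Proof. by move=> H; apply/matrixP => i k; rewrite !mxE H. Qed.

Lemma bd_sub c c' : bd (fun j => c j - c' j) = bd c - bd c'.
Proof. by apply/matrixP => i k; rewrite !mxE mulrBr. Qed.

Definition ee (p : nat) (j : 'I_n) : R := (p <= j)%N%:R.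
Definition ff (q : nat) (j : 'I_n) : R := (j <= q)%N%:R.

Lemma pq (S : 'M[R]_(2 * n)) (hS : symplectic S) p q (hp : (p <= n)%N) :
  \tr (bd (ee p) *m bd (ff q)) <= \tr (bd (ee p) *m S *m bd (ff q) *m S^T).
Proof.
case: (ltnP q p) => Hqp.
  rewrite bd_mul tr_bd big1; last first.
    move=> i _; rewrite /ee /ff; case: (leqP p (half_ord i)) => H1; last by rewrite mul0r.
    by rewrite leqNgt (leq_trans Hqp H1) mulr0.
  rewrite tr_form; apply: sumr_ge0 => i _; apply: sumr_ge0 => k _.
  by apply: mulr_ge0; [apply: mulr_ge0; apply: ler0n | apply: sqr_ge0].
have Hb : forall c : 'I_n -> R, (forall j, c j * c j = c j) -> bd c *m bd c = bd c.
  by move=> c Hc; rewrite bd_mul; apply: bd_ext.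
have Hee : forall j, ee p j * ee p j = ee p j by move=> j; rewrite /ee; case: leqP; rewrite ?mulr1 ?mulr0.
have Hff : forall j, ff q j * ff q j = ff q j by move=> j; rewrite /ff; case: leqP; rewrite ?mulr1 ?mulr0.
have EJ : 1%:M - bd (ee p) = (Jm p)^T *m Jm p.
  by rewrite bd_sub1 JtJ //; apply: bd_ext => j; rewrite /ee; case: leqP; rewrite ?subrr ?subr0.
have := key hS (OOt) (bd_tr _) (Hb _ Hee) (bd_tr _) (Hb _ Hff) (bd_Om _) (bd_Om _) EJ.
apply: le_trans; rewrite le_eqVlt; apply/orP; left; apply/eqP.
rewrite bd_mul (bd_ext (c' := fun j => ff q j - (1 - ee p j))); last first.
  move=> j; rewrite /ee /ff; case: leqP => H1; case: leqP => H2; rewrite /=.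
  - lra.
  - lra.
  - lra.
  - by exfalso; move: Hqp H1 H2; lia.
rewrite (_ : bd (fun j => ff q j - (1 - ee p j)) = bd (ff q) - bd (fun j => 1 - ee p j)); last exact: bd_sub.
rewrite linearB /= -bd_sub1 EJ mxtrace_mulC JJt // mxtrace1.
by [].
Qed.

Definition Z (S : 'M[R]_(2 * n)) (x y : 'I_n -> R) :=
  \sum_i \sum_k x (half_ord i) * y (half_ord k) * S i k ^+ 2.

Lemma Z_linl S x y I (c : I -> R) (x' : I -> 'I_n -> R) (r : seq I) :
  (forall j, x j = \sum_(p <- r) c p * x' p j) ->
  Z S x y = \sum_(p <- r) c p * Z S (x' p) y.
Proof.
move=> Hx; rewrite /Z.
under eq_bigr => i _ do under eq_bigr => k _ do rewrite Hx !mulr_suml.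
under eq_bigr => i _ do rewrite exchange_big.
rewrite exchange_big; apply: eq_bigr => p _.
rewrite mulr_sumr; apply: eq_bigr => i _; rewrite mulr_sumr; apply: eq_bigr => k _.
by rewrite !mulrA.
Qed.

Lemma Z_linr S x y I (c : I -> R) (y' : I -> 'I_n -> R) (r : seq I) :
  (forall j, y j = \sum_(p <- r) c p * y' p j) ->
  Z S x y = \sum_(p <- r) c p * Z S x (y' p).
Proof.
move=> Hy; rewrite /Z.
under eq_bigr => i _ do under eq_bigr => k _ do rewrite Hy mulr_sumr !mulr_suml.
under eq_bigr => i _ do rewrite exchange_big.
rewrite exchange_big; apply: eq_bigr => p _.
rewrite mulr_sumr; apply: eq_bigr => i _; rewrite mulr_sumr; apply: eq_bigr => k _.
by ring.
Qed.

Lemma trZ (x y : 'I_n -> R) (S : 'M[R]_(2 * n)) :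
  \tr (bd x *m S *m bd y *m S^T) = Z S x y.
Proof. exact: tr_form. Qed.

Lemma trZ1 (x y : 'I_n -> R) : \tr (bd x *m bd y) = Z 1%:M x y.
Proof. by rewrite -trZ trmx1 !mulmx1. Qed.

End Conc.

Section Abel.
Variable R : realFieldType.
Variable N : nat.
Variables alpha beta : 'I_N.+1 -> R.

Definition Aal (m : nat) : R := if m is m'.+1 then alpha (inord m') else 0.
Definition Bb (m : nat) : R := if (m < N.+1)%N then beta (inord m) else 0.

Lemma abel_a (j : 'I_N.+1) :
  alpha j = \sum_(p < N.+1) (Aal p.+1 - Aal p) * (p <= j)%N%:R.
Proof.
rewrite -(big_mkord xpredT (fun p => (Aal p.+1 - Aal p) * (p <= j)%N%:R)).
rewrite (big_cat_nat (n := j.+1)) //=.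
rewrite [X in _ + X]big1_seq => [|i]; last first.
  by move=> /andP [_]; rewrite mem_index_iota => /andP [H1 _]; rewrite leqNgt H1 mulr0.
rewrite addr0 (eq_big_nat _ _ (F2 := fun p => Aal p.+1 - Aal p)) => [|i /andP [_ Hi]]; last first.
  by rewrite ltnS in Hi; rewrite Hi mulr1.
by rewrite telescope_sumr //= subr0 inord_val.
Qed.

Lemma abel_b (l : 'I_N.+1) :
  beta l = \sum_(q < N.+1) (Bb q - Bb q.+1) * (l <= q)%N%:R.
Proof.
rewrite -(big_mkord xpredT (fun q => (Bb q - Bb q.+1) * (l <= q)%N%:R)).
rewrite (big_cat_nat (n := l)) //=; last exact: ltnW.
rewrite big1_seq => [|i]; last first.
  by move=> /andP [_]; rewrite mem_index_iota => /andP [_ H1]; rewrite leqNgt H1 mulr0.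
rewrite add0r (eq_big_nat _ _ (F2 := fun q => Bb q - Bb q.+1)) => [|i /andP [Hi _]]; last first.
  by rewrite Hi mulr1.
rewrite (telescope_sumr_eq (fun q => - Bb q)) => [||k _]; [|exact: ltnW|by rewrite opprK addrC].
by rewrite /Bb ltnn ltn_ord oppr0 sub0r opprK inord_val.
Qed.

End Abel.

Theorem mainTheorem2 (R : realType) (n : nat) (alpha beta : 'I_n -> R)
  (alpha_ge0 : forall j, 0 <= alpha j)
  (alpha_mono : forall i j : 'I_n, (i <= j)%N -> alpha i <= alpha j)
  (beta_ge0 : forall j, 0 <= beta j)
  (beta_anti : forall i j : 'I_n, (i <= j)%N -> beta j <= beta i) :
  (exists S : 'M[R]_(2 * n), symplectic S /\
     \tr (blockdiag2 alpha *m S *m blockdiag2 beta *m S^T)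
     = \tr (blockdiag2 alpha *m blockdiag2 beta)) /\
  (forall S : 'M[R]_(2 * n), symplectic S ->
     \tr (blockdiag2 alpha *m blockdiag2 beta)
     <= \tr (blockdiag2 alpha *m S *m blockdiag2 beta *m S^T)).
Proof.
split.
  exists 1%:M; split; first by rewrite /symplectic mul1mx trmx1 mulmx1.
  by rewrite trmx1 !mulmx1.
move=> S hS.
rewrite (_ : blockdiag2 alpha *m blockdiag2 beta =
   blockdiag2 alpha *m 1%:M *m blockdiag2 beta *m (1%:M)^T); last by rewrite trmx1 !mulmx1.
rewrite !trZ.
case: n alpha beta alpha_ge0 alpha_mono beta_ge0 beta_anti S hS => [|N] alpha beta alpha_ge0 alpha_mono beta_ge0 beta_anti S hS.
  by rewrite /Z !big1 // => i _; exfalso; have := ltn_ord i; move: (nat_of_ord i) => m; rewrite muln0.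
have da0 : forall p : 'I_N.+1, 0 <= Aal alpha p.+1 - Aal alpha p.
  case=> [[|m] Hm] /=; first by rewrite subr0.
  rewrite subr_ge0; apply: alpha_mono; rewrite !inordK //; exact: ltnW.
have db0 : forall q : 'I_N.+1, 0 <= Bb beta q - Bb beta q.+1.
  move=> q; rewrite /Bb ltn_ord; case: ifP => H; last by rewrite subr0.
  by rewrite subr_ge0; apply: beta_anti; rewrite !inordK.
rewrite (Z_linl 1%:M beta (c := fun p : 'I_N.+1 => Aal alpha p.+1 - Aal alpha p)
   (x' := fun (p : 'I_N.+1) (j : 'I_N.+1) => (p <= j)%N%:R) (abel_a alpha)).
rewrite (Z_linl S beta (c := fun p : 'I_N.+1 => Aal alpha p.+1 - Aal alpha p)
   (x' := fun (p : 'I_N.+1) (j : 'I_N.+1) => (p <= j)%N%:R) (abel_a alpha)).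
apply: ler_sum => p _; apply: ler_wpM2l => //.
rewrite (Z_linr 1%:M _ (c := fun q : 'I_N.+1 => Bb beta q - Bb beta q.+1)
   (y' := fun (q : 'I_N.+1) (j : 'I_N.+1) => (j <= q)%N%:R) (abel_b beta)).
rewrite (Z_linr S _ (c := fun q : 'I_N.+1 => Bb beta q - Bb beta q.+1)
   (y' := fun (q : 'I_N.+1) (j : 'I_N.+1) => (j <= q)%N%:R) (abel_b beta)).
apply: ler_sum => q _; apply: ler_wpM2l => //.
have := @pq _ _ S hS p q (ltnW (ltn_ord p)).
by rewrite trZ1 trZ.
Qed.
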